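(* For every permutation $w$ of $\{1,\ldots,n\}$, one has $\mathrm{spec}_q\,\mathrm{wt}(w)=q^{\mathrm{inv}(w)}$, where $\mathrm{inv}(w):=|\{(i,j): i<j,\ w_i>w_j\}|$.
   Context: Work in $\mathbb{Q}(x_1,x_2,\ldots)$ with the field endomorphism $F$ given by $F(x_i)=x_{i+1}$. Define $[n]:=x_1+\cdots+x_n$, $[0]!:=1$, $[n]!:=[n]\cdot F([n-1]!)=\prod_{j=0}^{n-1}F^j[n-j]$. For a $k$-element set $S=\{i_1>\cdots>i_k\}$ of positive integers, $\mathrm{wt}(S):=\frac{\prod_{j=1}^k F^{i_j-1}[j]}{[k]!}$ ($\mathrm{wt}(\emptyset)=1$). For a permutation $w=(w_1,\ldots,w_n)$ in one-line notation, $\mathrm{wt}(w)$ is defined recursively: the empty permutation has weight $1$; otherwise let $k:=w_1-1$, $S(w):=\{i:w_i\le k\}$, $a$ the permutation of $\{1,\ldots,k\}$ listing the values $w_i\le k$ in order of increasing $i$, and $\hat b$ the permutation of $\{1,\ldots,n-k-1\}$ listing the values $w_i-k-1$ for $w_i>k+1$ in order of increasing $i$; then $\mathrm{wt}(w):=\mathrm{wt}(S(w))\,\mathrm{wt}(a)\,F^{k+1}(\mathrm{wt}(\hat b))$. The $q$-specialization $\mathrm{spec}_q$ is the substitution $x_i\mapsto q^{i-1}-q^i$ into $\mathbb{Q}(q)$ (it is defined on all the rational functions $\mathrm{wt}(w)$, whose denominators are products of sums $x_a+x_{a+1}+\cdots+x_b$, which specialize to $q^{a-1}-q^b\neq 0$).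 *)

(* Defs.v *)
From HB Require Import structures.
From mathcomp Require Import all_boot all_order all_algebra all_fingroup.
From mathcomp Require Import fraction.
Set Implicit Arguments. Unset Strict Implicit. Unset Printing Implicit Defensive.
Import Order.TTheory GRing.Theory Num.Theory.
Local Open Scope ring_scope.

(* A rational function f in x_1, x_2, ... is represented semantically by its
   evaluation at an arbitrary point x : nat -> K of a field K (x i stands for
   x_i, i >= 1; x 0 is unused).  The shift F(x_i) = x_{i+1} then acts by
   (F^m f)(x) = f(fun i => x (i + m)). *)

Section Weights.
Variable K : fieldType.

Definition shiftx (m : nat) (x : nat -> K) : nat -> K := fun i => x (i + m)%N.

Definition brk (n : nat) (x : nat -> K) : K := \sum_(1 <= i < n.+1) x i.

Definition brkfact (n : nat) (x : nat -> K) : K :=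
  \prod_(j < n) brk (n - j) (shiftx j x).

(* wt(S) for S = {i_1 > ... > i_k}, given as the decreasing list [:: i_1; ...; i_k] *)
Definition wtS (S : seq nat) (x : nat -> K) : K :=
  (\prod_(j < size S) brk j.+1 (shiftx (nth 0 S j).-1 x)) / brkfact (size S) x.

(* wt(w) for w in one-line notation (a list of the values w_1, ..., w_n),
   by recursion with fuel. *)
Fixpoint wtf (fuel : nat) (w : seq nat) (x : nat -> K) : K :=
  match fuel with
  | 0 => 1
  | fuel'.+1 =>
    match w with
    | [::] => 1
    | w1 :: _ =>
      let k := w1.-1 in
      (* S(w) = {i : w_i <= k}, positions 1-based, listed decreasingly *)
      let S := rev [seq i.+1 | i <- iota 0 (size w) & (nth 0 w i <= k)%N] in
      let a := [seq v <- w | (v <= k)%N] in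
      let bh := [seq (v - k.+1)%N | v <- w & (k.+1 < v)%N] in
      wtS S x * wtf fuel' a x * wtf fuel' bh (shiftx k.+1 x)
    end
  end.

Definition wt (w : seq nat) (x : nat -> K) : K := wtf (size w) w x.
End Weights.

Definition oneline (n : nat) (s : 'S_n) : seq nat :=
  [seq (s i).+1 | i <- enum 'I_n].

Definition invnum (n : nat) (s : 'S_n) : nat :=
  #|[set p : 'I_n * 'I_n | (p.1 < p.2)%N && (s p.2 < s p.1)%N]|.

Definition Qq := {fraction {poly rat}}.
Definition qvar : Qq := tofrac 'X.
Definition specx : nat -> Qq := fun i => qvar ^+ i.-1 - qvar ^+ i.

(* Main.v *)
Require Import Defs.
From mathcomp Require Import all_boot all_order all_algebra all_fingroup.
From mathcomp Require Import fraction.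
From Stdlib Require Import FunctionalExtensionality.
From mathcomp Require Import ring zify.
Set Implicit Arguments. Unset Strict Implicit. Unset Printing Implicit Defensive.
Import Order.TTheory GRing.Theory Num.Theory.
Local Open Scope ring_scope.

Lemma shiftxx (K : fieldType) a b (x : nat -> K) : shiftx a (shiftx b x) = shiftx (a + b) x.
Proof. apply: functional_extensionality => i; by rewrite /shiftx addnA. Qed.

Lemma shiftx0 (K : fieldType) (x : nat -> K) : shiftx 0 x = x.
Proof. apply: functional_extensionality => i; by rewrite /shiftx addn0. Qed.

Lemma brk_spec n t : brk n (shiftx t specx) = qvar ^+ t * (1 - qvar ^+ n).
Proof.
elim: n => [|n IH]; first by rewrite /brk big_geq // expr0 subrr mulr0.
rewrite /brk big_nat_recr //= -/(brk n _) IH /shiftx /specx addSn /=.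
rewrite !exprS !exprD; ring.
Qed.

Lemma qvar_neq0 : qvar != 0.
Proof. by rewrite /qvar tofrac_eq0 polyX_eq0. Qed.

Lemma oneBq_neq0 n : (0 < n)%N -> 1 - qvar ^+ n != 0.
Proof.
move=> n0; rewrite /qvar -tofracXn -tofrac1 -tofracB tofrac_eq0.
apply/eqP => /(congr1 (fun p : {poly rat} => p`_n)).
by rewrite coefB coef1 coefXn eqxx coef0 (gtn_eqF n0) sub0r => /eqP; rewrite oppr_eq0 oner_eq0.
Qed.

Lemma qpow_neq0 a : qvar ^+ a != 0.
Proof. rewrite expf_neq0 //; exact: qvar_neq0. Qed.
Lemma rev_prod (R : comNzRingType) k (F : nat -> R) :
  \prod_(i < k) F (k - i)%N = \prod_(i < k) F i.+1.
Proof.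
rewrite (reindex_inj rev_ord_inj) /=; apply: eq_bigr => i _.
by rewrite subKn.
Qed.

Lemma cancel_lem (F : fieldType) (x y z P : F) : P != 0 -> y != 0 ->
  x * y * P / (z * y * P) = x / z.
Proof. move=> P0 y0; by rewrite -mulf_div divff // mulr1 -mulf_div divff // mulr1. Qed.

Lemma wtS_spec S m : wtS S (shiftx m specx) =
  qvar ^+ (\sum_(j < size S) (nth 0 S j).-1)%N / qvar ^+ (\sum_(j < size S) j)%N.
Proof.
rewrite /wtS /brkfact.
under eq_bigr do rewrite shiftxx brk_spec.
under [X in _ / X]eq_bigr do rewrite shiftxx brk_spec.
set k := size S.
rewrite big_split [X in _ / X]big_split /=.
rewrite (@rev_prod _ _ (fun j => 1 - qvar ^+ j)).
set P := \prod_(i < k) (1 - qvar ^+ i.+1).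
have P0 : P != 0.
  by rewrite prodf_seq_neq0; apply/allP => i _; rewrite oneBq_neq0.
rewrite !prodrXr.
rewrite (big_split (R := nat)) (big_split (R := nat)) /= !exprD.
have y0 : qvar ^+ (\sum_(i<k) m)%N != 0 by exact: qpow_neq0.
exact: (cancel_lem (qvar ^+ (\sum_(i<k) (nth 0 S i).-1)%N) (qvar ^+ (\sum_(i<k) i)%N) P0 y0).
Qed.

Local Close Scope ring_scope.

Fixpoint linv (w : seq nat) : nat :=
  if w is x :: t then (count (fun y => y < x) t + linv t)%N else 0%N.
Fixpoint cross (Q : pred nat) (w : seq nat) : nat :=
  if w is x :: t then ((if Q x then 0 else count Q t) + cross Q t)%N else 0%N.

Lemma count_nth (Q : pred nat) w :
  count (fun i => Q (nth 0 w i)) (iota 0 (size w)) = count Q w.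
Proof. by rewrite -count_map -/(mkseq _ _) mkseq_nth. Qed.

Lemma iota_succ m n : iota m.+1 n = map succn (iota m n).
Proof. by elim: n m => //= n IH m; rewrite IH. Qed.

Lemma sumpos (Q : pred nat) w :
  \sum_(i <- iota 0 (size w) | Q (nth 0 w i)) i = (cross Q w + \sum_(j < count Q w) j)%N.
Proof.
elim: w => [|x t IH]; first by rewrite big_nil big_ord0.
rewrite /= iota_succ big_cons big_map /=.
under eq_bigr do rewrite -add1n.
rewrite big_split /= sum1_count count_nth IH.
case: (Q x); rewrite /= ?add0n ?big_ord_recr /=; set T := \sum_(_ < _) _; lia.
Qed.

Lemma count_add (s : seq nat) (a b c : pred nat) :
  (forall z, z \in s -> c z = a z + b z :> nat) -> count c s = (count a s + count b s)%N.
Proof.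
elim: s => //= z s IH H.
rewrite H ?mem_head // IH; first lia.
by move=> u us; apply: H; rewrite in_cons us orbT.
Qed.

Lemma invsplit k t : k.+1 \notin t ->
  linv t = (linv [seq v <- t | v <= k] + linv [seq v - k.+1 | v <- t & k.+1 < v]
           + cross (fun v => v <= k) t)%N.
Proof.
elim: t => [|y t IH] //=; rewrite in_cons negb_or => /andP[yk kt].
rewrite (IH kt).
case: (leqP y k) => h.
  rewrite ltnNge (leqW h) /= count_filter.
  rewrite (@eq_count _ _ (predI (fun z => z < y) (fun v => v <= k))); first lia.
  move=> z /=; case: (ltnP z y) => //= zy; apply/esym; apply/idP; lia.
have h2 : k.+1 < y by lia.
rewrite h2 /= count_map count_filter.
rewrite (@count_add _ (fun v => v <= k) (predI (preim (fun v => v - k.+1) (fun z => z < y - k.+1)) (fun v => k.+1 < v))); first lia.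
move=> z zt /=.
have zk : z != k.+1 by apply: contraNneq kt => <-.
case: (leqP z k) => h3.
  have -> : z < y by lia.
  have -> : k.+1 < z = false by lia.
  by rewrite andbF.
have h4 : k.+1 < z by lia.
rewrite h4 andbT.
case: (ltnP z y) => h5.
  have -> : z - k.+1 < y - k.+1 by lia.
  by [].
have -> : z - k.+1 < y - k.+1 = false by lia.
by [].
Qed.

Lemma count_sum (a : pred nat) t :
  count a t = \sum_(j < size t) a (nth 0 t j).
Proof.
rewrite -sum1_count (big_nth 0) big_mkord big_mkcond /=.
by apply: eq_bigr => j _; case: (a _).
Qed.

Lemma inv_sum l : linv l = \sum_(i < size l) \sum_(j < size l) ((i < j) && (nth 0 l j < nth 0 l i)).
Proof.
elim: l => [|x t IH]; first by rewrite big_ord0.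
rewrite /= big_ord_recl big_ord_recl /= add0n.
rewrite count_sum IH; congr (_ + _)%N.
apply: eq_bigr => i _; rewrite big_ord_recl /= add0n.
by apply: eq_bigr => j _; rewrite /bump /= !add1n ltnS.
Qed.

Lemma invnum_inv n (s : 'S_n) : invnum s = linv (oneline s).
Proof.
rewrite inv_sum /invnum /oneline size_map size_enum_ord.
have E : forall i : 'I_n, nth 0 [seq (s i).+1 | i <- enum 'I_n] i = (s i).+1.
  by move=> i; rewrite (nth_map i) ?size_enum_ord // nth_ord_enum.
under [RHS]eq_bigr do under eq_bigr do rewrite !E ltnS.
rewrite pair_bigA /= -sum1_card big_mkcond /=.
by apply: eq_bigr => p _; rewrite inE; case: (_ && _).
Qed.

Local Open Scope ring_scope.

Lemma S_size (Q : pred nat) w :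
  size (rev [seq i.+1 | i <- iota 0 (size w) & Q (nth 0 w i)]) = count Q w.
Proof. by rewrite size_rev size_map size_filter count_nth. Qed.

Lemma S_sum (Q : pred nat) w :
  (\sum_(j < size (rev [seq i.+1 | i <- iota 0 (size w) & Q (nth 0 w i)]))
     (nth 0 (rev [seq i.+1 | i <- iota 0 (size w) & Q (nth 0 w i)]) j).-1
  = cross Q w + \sum_(j < count Q w) j)%N.
Proof.
rewrite -(big_mkord xpredT (fun j => (nth 0 _ j).-1)) -(big_nth 0 xpredT predn).
have hp : forall L : seq nat, perm_eq (rev L) L by move=> L; rewrite perm_rev.
rewrite (perm_big _ (hp _)) /= big_map big_filter /=.
exact: sumpos.
Qed.

Lemma wtf_cons f k t (y : nat -> Qq) : wtf f.+1 (k.+1 :: t) y =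
  wtS (rev [seq i.+1 | i <- iota 0 (size (k.+1::t)) & (nth 0 (k.+1::t) i <= k)%N]) y
  * wtf f [seq v <- k.+1::t | (v <= k)%N] y
  * wtf f [seq (v - k.+1)%N | v <- k.+1::t & (k.+1 < v)%N] (shiftx k.+1 y).
Proof. by []. Qed.

Lemma main fuel : forall w m, (size w <= fuel)%N -> uniq w -> all (fun v => 0 < v)%N w ->
  wtf fuel w (shiftx m specx) = qvar ^+ linv w.
Proof.
elim: fuel => [|f IH] [|x t] m sz //.
move=> /andP[xt ut] /andP[x0 pt].
case: x x0 xt sz => [|k] // _ xt sz.
rewrite wtf_cons wtS_spec (S_sum (fun v => v <= k)%N) (S_size (fun v => v <= k)%N).
rewrite exprD mulfK ?qpow_neq0 //.
rewrite shiftxx.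
have ea : [seq v <- k.+1 :: t | (v <= k)%N] = [seq v <- t | (v <= k)%N] by rewrite /= ltnn.
have eb : [seq (v - k.+1)%N | v <- k.+1 :: t & (k.+1 < v)%N] = [seq (v - k.+1)%N | v <- t & (k.+1 < v)%N] by rewrite /= ltnn.
have sz' : (size t <= f)%N by [].
rewrite ea eb !IH.
- rewrite -!exprD; congr (_ ^+ _).
  rewrite /= ltnn (invsplit xt) /=.
  have ec : count (fun y => y < k.+1)%N t = count (fun v => v <= k)%N t by [].
  rewrite ec; lia.
- by rewrite size_map size_filter (leq_trans (count_size _ _)).
- rewrite map_inj_in_uniq ?filter_uniq //.
  move=> u v; rewrite !mem_filter => /andP[hu _] /andP[hv _] e; lia.
- apply/allP => v /mapP[u]; rewrite mem_filter => /andP[hu _] ->; rewrite /= subn_gt0 //.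
- by rewrite size_filter (leq_trans (count_size _ _)).
- by rewrite filter_uniq.
- apply/allP => v; rewrite mem_filter => /andP[_ vt]; exact: (allP pt).
Qed.

Theorem corollary5p4 (n : nat) (s : 'S_n) :
  wt (oneline s) specx = qvar ^+ invnum s.
Proof.
rewrite /wt -(shiftx0 specx) main //.
- by rewrite invnum_inv.
- rewrite map_inj_uniq ?enum_uniq // => i j /eq_add_S /val_inj; exact: perm_inj.
- by apply/allP => v /mapP[i _ ->].
Qed.
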